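(* Let $\Lambda$ be a recursive $\varepsilon$-number, and let $I$, $H$, $R_n$, $S_n$, $R_n^\alpha$, $S_n^\alpha$ be as in the context. Then for all $x, y \in H$, $n < \omega$ and $\alpha < \Lambda$: (1) $x R_n^{\alpha+1} y$ if and only if there exists $z \in H$ with $x R_n z$ and $z R_n^{\alpha} y$; (2) $x S_n^{\alpha+1} y$ if and only if there exists $z \in H$ with $x S_n z$ and $z S_n^{\alpha} y$.
   Context: Fix a recursive ordinal $\Lambda$ that is an $\varepsilon$-number, i.e. $\omega^\Lambda = \Lambda$. The ordinal logarithm is defined by $\ell(0)=0$ and $\ell(\alpha+\omega^\beta)=\beta$. An $\ell$-sequence (Ignatiev sequence) is a sequence of ordinals $x=\langle x_0,x_1,x_2,\dots\rangle$ indexed by $\omega$ with $x_{i+1}\le \ell(x_i)$ for all $i<\omega$. Let $I$ be the set of $\ell$-sequences all of whose entries are $<\Lambda$, and let $H\subseteq I$ be the set of those $x\in I$ such that $x_j=0$ for some $j<\omega$. For $n<\omega$, define $x R_n y$ for $x,y\in I$ (and $x S_n y$ for $x,y\in H$, the same condition) by: $x_m>y_m$ for all $m\le n$ and $x_i\ge y_i$ for all $i>n$. Define $R_n^\alpha$ on $I$ recursively: $x R_n^0 y$ iff $x=y$; $x R_n^{1+\alpha} y$ iff for every $\beta<1+\alpha$ there is $z\in I$ with $x R_n z$ and $z R_n^\beta y$. Define $S_n^\alpha$ on $H$ in the same way, with $S_n$ in place of $R_n$ and $z$ ranging over $H$. *)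

(* Defs.v *)
From mathcomp Require Import all_boot.
Set Implicit Arguments. Unset Strict Implicit. Unset Printing Implicit Defensive.

(* The ordinals below Lambda are modelled as natural numbers equipped with a
   decidable (boolean) strict well-order [lt]; Lambda is its order type. *)
Section Ord.
Variable lt : nat -> nat -> bool.

Definition ole (a b : nat) : Prop := ~ lt b a.

Definition is_wellorder : Prop :=
  (forall a, ~ lt a a) /\
  (forall a b c, lt a b -> lt b c -> lt a c) /\
  (forall a b, lt a b \/ a = b \/ lt b a) /\
  well_founded (fun a b => lt a b).

Definition is_zero (a : nat) : Prop := forall d, ~ lt d a.

Definition is_succ (a b : nat) : Prop := lt a b /\ forall d, lt a d -> ole b d.

(* Cantor-normal-form words: omega^beta is the order type of the finite
   non-increasing lists of ordinals < beta, ordered lexicographically. *)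
Fixpoint nonincr (s : list nat) : Prop :=
  match s with
  | a :: ((b :: _) as t) => ole b a /\ nonincr t
  | _ => True
  end.

Fixpoint lexlt (s t : list nat) : Prop :=
  match s, t with
  | nil, _ :: _ => True
  | a :: s', b :: t' => lt a b \/ (a = b /\ lexlt s' t')
  | _, _ => False
  end.

Fixpoint allP (B : nat -> Prop) (s : list nat) : Prop :=
  match s with nil => True | a :: t => B a /\ allP B t end.

Definition cnf_word (B : nat -> Prop) (s : list nat) : Prop :=
  nonincr s /\ allP B s.

Definition iso_to_words (D B : nat -> Prop) : Prop :=
  exists f : nat -> list nat,
    (forall d, D d -> cnf_word B (f d)) /\
    (forall w, cnf_word B w -> exists d, D d /\ f d = w) /\
    (forall d d', D d -> D d' -> (lt d d' <-> lexlt (f d) (f d'))).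

(* Lambda is an epsilon-number: omega^Lambda = Lambda *)
Definition is_epsilon : Prop := iso_to_words (fun _ => True) (fun _ => True).

(* ordinal logarithm as a relation: ell g = b  iff
   g = 0 and b = 0, or g = a + omega^b for some a, i.e. [a, g) has type omega^b *)
Definition ell (g b : nat) : Prop :=
  (is_zero g /\ is_zero b) \/
  (exists a, iso_to_words (fun d => ole a d /\ lt d g) (fun d => lt d b)).

Definition seqo := nat -> nat.

Definition in_I (x : seqo) : Prop :=
  forall i, exists b, ell (x i) b /\ ole (x i.+1) b.

Definition in_H (x : seqo) : Prop := in_I x /\ exists j, is_zero (x j).

(* x R_n y  (also S_n on H) *)
Definition Rn (n : nat) (x y : seqo) : Prop :=
  (forall m, m <= n -> lt (y m) (x m)) /\ (forall i, n < i -> ole (y i) (x i)).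

(* R_n^alpha (P = in_I) and S_n^alpha (P = in_H):
   x R^0 y iff x = y; for alpha <> 0 (i.e. alpha = 1 + alpha'),
   x R^alpha y iff for all beta < alpha there is z in P with x R_n z and z R^beta y.
   Since lt is well-founded, this inductive predicate is the unique solution
   of the recursive definition. *)
Inductive Rpow (P : seqo -> Prop) (n : nat) : nat -> seqo -> seqo -> Prop :=
  | Rpow0 : forall a x, is_zero a -> Rpow P n a x x
  | RpowS : forall a x y, ~ is_zero a ->
      (forall b, lt b a -> exists z, P z /\ Rn n x z /\ Rpow P n b z y) ->
      Rpow P n a x y.

End Ord.

(* Main.v *)
From Stdlib Require Import Classical FunctionalExtensionality.
Require Import Defs.
From mathcomp Require Import all_boot.

Set Implicit Arguments.
Section S.
Variable lt : nat -> nat -> bool.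
Hypothesis W : is_wellorder lt.

Lemma irr a : ~ lt a a. Proof. by case: W. Qed.
Lemma trn a b c : lt a b -> lt b c -> lt a c. Proof. case: W => _ [h _]; exact: h. Qed.
Lemma tri a b : lt a b \/ a = b \/ lt b a. Proof. case: W => _ [_ [h _]]; exact: h. Qed.

Lemma ole_trans a b c : ole lt a b -> ole lt b c -> ole lt a c.
Proof.
rewrite /ole; move=> h1 h2 h3; case: (tri c b) => [h|[h|h]].
- by apply: h2.
- by subst; apply: h1.
- exact: h1 (trn h h3).
Qed.

Lemma zero_le z a : is_zero lt z -> ole lt z a.
Proof. by move=> hz h; apply: (hz a). Qed.

Lemma zero_uniq a b : is_zero lt a -> is_zero lt b -> a = b.
Proof. move=> ha hb; case: (tri a b) => [h|[h|h]] //; [by case: (hb a)|by case: (ha b)]. Qed.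

Lemma le_zero a b : is_zero lt b -> ole lt a b -> is_zero lt a.
Proof.
move=> hb hab d hd; case: (tri a b) => [h|[h|h]].
- by apply: (hb a).
- subst; by apply: (hb d).
- by apply: hab.
Qed.

Lemma ell_zero g b : is_zero lt g -> ell lt g b -> is_zero lt b.
Proof.
move=> hg [[_ h]|[a [f [_ [hs _]]]]] //.
have [d [[_ hd] _]] : exists d, (ole lt a d /\ lt d g) /\ f d = nil.
  apply: hs; split => //.
by case: (hg d).
Qed.

Lemma Rn_trans n x z y : Rn lt n x z -> Rn lt n z y -> Rn lt n x y.
Proof.
move=> [h1 h2] [h3 h4]; split.
- move=> m hm; apply: (trn (h3 m hm) (h1 m hm)).
- move=> i hi; apply: (ole_trans (h4 i hi) (h2 i hi)).
Qed.

Lemma exists_zero : exists c, is_zero lt c.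
Proof.
case: W => _ [_ [_ wf]].
suff H : forall d : nat, exists c, is_zero lt c by exact: H 0.
apply: (@well_founded_ind nat _ wf (fun _ => exists c, is_zero lt c)) => d IH.
case: (classic (is_zero lt d)) => hd; first by exists d.
apply: NNPP => hn; apply: hd => e he; case: (IH e he) => c hc; apply: hn; by exists c.
Qed.

Lemma Rpow_nz P n a z y : Rpow lt P n a z y -> ~ is_zero lt a ->
  forall b, lt b a -> exists w, P w /\ Rn lt n z w /\ Rpow lt P n b w y.
Proof. by case => // a' x' y' ha h _; exact: h. Qed.

Lemma Rpow_zero P n a w y : Rpow lt P n a w y -> is_zero lt a -> w = y.
Proof. by case => // a' x' y' ha _ hz. Qed.

Lemma Rpow_Rn P n a z y : Rpow lt P n a z y -> ~ is_zero lt a -> Rn lt n z y.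
Proof.
move=> h ha; have [c hc] := exists_zero.
have hca : lt c a.
  case: (tri c a) => [//|[e|e]]; [by subst|by case: (hc a)].
have [w [_ [hzw hw]]] := Rpow_nz h ha hca.
by rewrite -(Rpow_zero hw hc).
Qed.

Lemma Rpow_mono P n a b z y : Rpow lt P n a z y -> ~ is_zero lt a -> ~ is_zero lt b ->
  lt b a -> Rpow lt P n b z y.
Proof.
move=> h ha hb hba; apply: RpowS => // c hc.
exact: (Rpow_nz h ha (trn hc hba)).
Qed.

Lemma back P n x y z alpha alpha1 : P y -> P z -> Rn lt n x z ->
  Rpow lt P n alpha z y -> is_succ lt alpha alpha1 -> Rpow lt P n alpha1 x y.
Proof.
move=> Py Pz hxz hzy [hlt hs].
apply: RpowS.
  by move=> hz; apply: (hz alpha).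
move=> b hb; case: (tri b alpha) => [h|[h|h]].
- have ha : ~ is_zero lt alpha by move=> hz; apply: (hz b).
  case: (classic (is_zero lt b)) => hbz.
  + exists y; split => //; split.
      exact: (Rn_trans hxz (Rpow_Rn hzy ha)).
    exact: Rpow0.
  + exists z; split => //; split => //; exact: (Rpow_mono hzy ha hbz h).
- by subst; exists z.
- by case: (hs b h).
Qed.

Lemma fwd P n x y alpha alpha1 : Rpow lt P n alpha1 x y -> is_succ lt alpha alpha1 ->
  exists z, P z /\ Rn lt n x z /\ Rpow lt P n alpha z y.
Proof.
move=> h [hlt hs]; apply: (Rpow_nz h) => // hz; by apply: (hz alpha).
Qed.

Definition trunc (K : nat) (z y : seqo) : seqo := fun i => if i <= K then z i else y i.

Lemma H_tail y : in_H lt y -> exists K, forall i, K < i -> is_zero lt (y i).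
Proof.
move=> [hI [j hj]]; exists j => i; elim: i => // i IH hi.
have hz : is_zero lt (y i).
  by case: (ltnP j i) => h; [exact: IH | have -> : i = j by apply/eqP; rewrite eqn_leq h -ltnS].
have [b [hb hle]] := hI i.
exact: (le_zero (ell_zero hz hb) hle).
Qed.

Lemma trunc_I K z y : in_I lt z -> in_I lt y -> (forall i, K < i -> is_zero lt (y i)) ->
  in_I lt (trunc K z y).
Proof.
move=> hz hy hK i; rewrite /trunc.
case: (ltngtP i K) => h.
- exact: hz.
- exact: hy.
- subst i; have [b [hb _]] := hz K; exists b; split => //.
  apply: zero_le; apply: hK; exact: ltnSn.
Qed.

Lemma trunc_Rpow n K y : n <= K -> in_I lt y -> (forall i, K < i -> is_zero lt (y i)) ->
  forall a z, Rpow lt (in_I lt) n a z y -> Rpow lt (in_I lt) n a (trunc K z y) y.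
Proof.
move=> hn hy hK a.
have wf : well_founded (fun a b => lt a b) by case: W => _ [_ [_ wf]].
move: a; apply: (@well_founded_ind nat _ wf (fun a => forall z, Rpow lt (in_I lt) n a z y -> Rpow lt (in_I lt) n a (trunc K z y) y)) => a IH z h.
case: (classic (is_zero lt a)) => ha.
- have e := Rpow_zero h ha; subst z.
  have -> : trunc K y y = y.
    by apply: functional_extensionality => i; rewrite /trunc; case: (i <= K).
  exact: Rpow0.
- apply: RpowS => // b hb.
  have [w [hw [hxw hwy]]] := Rpow_nz h ha hb.
  exists (trunc K w y); split; first exact: trunc_I.
  split; last exact: IH.
  case: hxw => h1 h2; split.
  + move=> m hm; rewrite /trunc (leq_trans hm hn); exact: h1.
  + move=> i hi; rewrite /trunc; case: (i <= K); [exact: h2|exact: irr].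
Qed.
End S.
Unset Implicit Arguments.

Theorem proposition4p6 (lt : nat -> nat -> bool) :
  is_wellorder lt -> is_epsilon lt ->
  forall (x y : seqo) (n alpha alpha1 : nat),
    in_H lt x -> in_H lt y -> is_succ lt alpha alpha1 ->
    (Rpow lt (in_I lt) n alpha1 x y <->
       exists z, in_H lt z /\ Rn lt n x z /\ Rpow lt (in_I lt) n alpha z y) /\
    (Rpow lt (in_H lt) n alpha1 x y <->
       exists z, in_H lt z /\ Rn lt n x z /\ Rpow lt (in_H lt) n alpha z y).
Proof.
move=> W _ x y n alpha alpha1 hx hy hs; split; split.
- move=> h; have [z [hz [hxz hzy]]] := fwd h hs.
  have [K hK] := H_tail W hy.
  have hK' : forall i, maxn K n < i -> is_zero lt (y i).
    move=> i hi; apply: hK; exact: (leq_ltn_trans (leq_maxl K n) hi).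
  have hnK : n <= maxn K n by exact: leq_maxr.
  exists (trunc (maxn K n) z y); split; [split|split].
  + exact: (trunc_I _ hz hy.1 hK').
  + exists (maxn K n).+1; rewrite /trunc ltnn; apply: hK'; exact: ltnSn.
  + case: hxz => h1 h2; split.
    * move=> m hm; rewrite /trunc (leq_trans hm hnK); exact: h1.
    * move=> i hi; rewrite /trunc; case: ifP => hiK; first exact: h2.
      apply: zero_le; apply: hK'; by rewrite ltnNge hiK.
  + exact: (trunc_Rpow W _ hnK hy.1 hK' hzy).
- move=> [z [hz [hxz hzy]]]; exact: (back W hy.1 hz.1 hxz hzy hs).
- move=> h; exact: (fwd h hs).
- move=> [z [hz [hxz hzy]]]; exact: (back W hy hz hxz hzy hs).
Qed.
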